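(* Let $(M,\mathcal T)$ be a closed pseudo 3-manifold which admits a zero-curvature generalized decorated metric. Let $l_0\in\mathbb R^E$ and write $l_0=w+l_0^\top$ with $w\in\mathbb R^V$ and $l_0^\top$ the orthogonal projection of $l_0$ to $\mathbb R^E/\widehat{\mathbb R^V}$. Then the solution $l(t)$ of the extended Ricci flow $\frac{d}{dt}l(t)=\widetilde K(l(t))$ with $l(0)=l_0$ satisfies $l(t)=w+l^\top(t)$ for all $t\in[0,\infty)$, where $l^\top(t)$ is the solution of the extended Ricci flow with initial data $l_0^\top$. Moreover, $l^\top(t)\in\mathbb R^E/\widehat{\mathbb R^V}$ for all $t\in[0,\infty)$.
   Context: Closed pseudo 3-manifold $(M,\mathcal T)$: quotient of a disjoint union $\mathscr T$ of finitely many tetrahedra by affine isomorphisms pairing faces, every 2-face being paired with another; $V,E$ are the sets of vertex and edge classes. For a tetrahedron $\sigma$ with vertices $v_1,\dots,v_4$ and $l\in\mathbb R^E$, $l_\sigma=(l_{ij})\in\mathbb R^6$, $l_{ij}=l(\text{class of } v_iv_j)$. Extended dihedral angles: for $(x_1,x_2,x_3)\in\mathbb R^3_{>0}$, $a_i$ is the Euclidean angle opposite $x_i$ if strict triangle inequalities hold, and $a_i=\pi$, $a_j=a_k=0$ if $x_i\ge x_j+x_k$. For $l\in\mathbb R^6$, $\{i,j,k,h\}=\{1,2,3,4\}$, $\alpha_{ij}(l)$ is the generalized angle opposite the side $e^{(l_{ij}+l_{kh})/2}$ in the generalized triangle with sides $e^{(l_{ij}+l_{kh})/2},e^{(l_{ik}+l_{jh})/2},e^{(l_{ih}+l_{jk})/2}$.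 A generalized decorated metric is any $l\in\mathbb R^E$; its generalized Ricci curvature is $\widetilde K_e(l)=2\pi-\sum\alpha_{ij}(l_\sigma)$ over pairs (tetrahedron $\sigma$, edge $v_iv_j$ of $\sigma$ in class $e$); it is zero-curvature if $\widetilde K(l)=0$. $\mathbb R^V$ acts on $\mathbb R^E$ by $(w+l)_e=l_e+w(e_+)+w(e_-)$ with $e_\pm$ the endpoints of $e$; $\widehat{\mathbb R^V}=\{w+0:w\in\mathbb R^V\}$ and $\mathbb R^E/\widehat{\mathbb R^V}$ denotes its orthogonal complement in $\mathbb R^E$ (standard inner product). *)

(* Defs.v *)
From HB Require Import structures.
From mathcomp Require Import all_boot all_order all_algebra all_fingroup.
From mathcomp Require Import all_classical all_reals all_analysis.
From Stdlib Require Import Relations.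
Set Implicit Arguments. Unset Strict Implicit. Unset Printing Implicit Defensive.
Import Order.TTheory GRing.Theory Num.Theory.
Import numFieldNormedType.Exports.
Local Open Scope classical_set_scope.
Local Open Scope ring_scope.

(*   T : finite type of tetrahedra; vertices of each tetrahedron are 'I_4. *)
(*   glue s k = (t, p) : the face of s opposite vertex k is glued to the   *)
(*     face of t opposite vertex p k, vertex i (i <> k) of s being sent    *)
(*     to vertex p i of t (an affine isomorphism of faces).                *)
(*   vcl s i : vertex class in V of vertex i of s.                         *)
(*   ecl s i j : edge class in E of edge v_i v_j of s (i <> j).            *)
(*   eend e : the (unordered) pair of endpoints e_-, e_+ of e.             *)

Section Pseudo.
Variables (T V E : finType).
Variable glue : T -> 'I_4 -> (T * {perm 'I_4})%type.
Variable vcl : T -> 'I_4 -> V.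
Variable ecl : T -> 'I_4 -> 'I_4 -> E.
Variable eend : E -> (V * V)%type.

Definition vglued (x y : (T * 'I_4)%type) : Prop :=
  exists k : 'I_4, x.2 <> k /\ (glue x.1 k).1 = y.1 /\ (glue x.1 k).2 x.2 = y.2.

(* elementary identification of (oriented) edges: reversal or face gluing *)
Definition eglued (x y : (T * 'I_4 * 'I_4)%type) : Prop :=
  (y = (x.1.1, x.2, x.1.2)) \/
  exists k : 'I_4, x.1.2 <> k /\ x.2 <> k /\ (glue x.1.1 k).1 = y.1.1 /\
    (glue x.1.1 k).2 x.1.2 = y.1.2 /\ (glue x.1.1 k).2 x.2 = y.2.

Definition closed_pseudo3 : Prop :=
  (* every 2-face is paired with another 2-face, the pairing is an involution *)
  (forall (s : T) (k : 'I_4),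
      ((glue s k).1, (glue s k).2 k) <> (s, k) /\
      glue (glue s k).1 ((glue s k).2 k) = (s, ((glue s k).2)^-1%g)) /\
  (* V is the set of vertex classes of the quotient *)
  (forall v : V, exists s i, vcl s i = v) /\
  (forall x y : T * 'I_4,
      vcl x.1 x.2 = vcl y.1 y.2 <-> clos_refl_sym_trans _ vglued x y) /\
  (* E is the set of edge classes of the quotient *)
  (forall e : E, exists s i j, i <> j /\ ecl s i j = e) /\
  (forall x y : T * 'I_4 * 'I_4, x.1.2 <> x.2 -> y.1.2 <> y.2 ->
      (ecl x.1.1 x.1.2 x.2 = ecl y.1.1 y.1.2 y.2 <->
       clos_refl_sym_trans _ eglued x y)) /\
  (forall s i j, i <> j ->
      eend (ecl s i j) = (vcl s i, vcl s j) \/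
      eend (ecl s i j) = (vcl s j, vcl s i)).

End Pseudo.

Section Angles.
Variable R : realType.

(* generalized angle opposite x1 in the generalized triangle (x1,x2,x3) *)
Definition ext_angle (x1 x2 x3 : R) : R :=
  if x2 + x3 <= x1 then pi
  else if (x1 + x3 <= x2) || (x1 + x2 <= x3) then 0
  else acos ((x2 ^+ 2 + x3 ^+ 2 - x1 ^+ 2) / (2 * x2 * x3)).

Definition oth (i j : 'I_4) : seq 'I_4 := [seq k <- enum 'I_4 | (k != i) && (k != j)].
Definition oth1 (i j : 'I_4) : 'I_4 := nth ord0 (oth i j) 0.
Definition oth2 (i j : 'I_4) : 'I_4 := nth ord0 (oth i j) 1.

Definition alpha (T E : finType) (ecl : T -> 'I_4 -> 'I_4 -> E)
    (l : E -> R) (s : T) (i j : 'I_4) : R :=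
  let k := oth1 i j in let h := oth2 i j in
  let L a b := l (ecl s a b) in
  ext_angle (expR ((L i j + L k h) / 2)) (expR ((L i k + L j h) / 2))
            (expR ((L i h + L j k) / 2)).

Definition gcurv (T E : finType) (ecl : T -> 'I_4 -> 'I_4 -> E)
    (l : E -> R) (e : E) : R :=
  2 * pi - \sum_(s : T) \sum_(i : 'I_4) \sum_(j : 'I_4 | (i < j)%N && (ecl s i j == e))
             alpha ecl l s i j.

Definition vact (V E : finType) (eend : E -> (V * V)%type) (w : V -> R) (l : E -> R) : E -> R :=
  fun e => l e + w (eend e).1 + w (eend e).2.

(* l lies in R^E / hat(R^V), the orthogonal complement of {w + 0} *)
Definition in_quot (V E : finType) (eend : E -> (V * V)%type) (l : E -> R) : Prop :=
  forall w : V -> R, \sum_(e : E) l e * vact eend w (fun _ => 0) e = 0.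

Definition ext_ricci_sol (T E : finType) (ecl : T -> 'I_4 -> 'I_4 -> E)
    (l : R -> E -> R) (l0 : E -> R) : Prop :=
  l 0 = l0 /\
  (forall (e : E) (t : R), 0 < t ->
      is_derive t 1 (fun s => l s e) (gcurv ecl (l t) e)) /\
  (forall e : E, (fun s => l s e) @ (0:R)^'+ --> l 0 e).

End Angles.

(* Main.v *)
Require Import Defs.
From HB Require Import structures.
From mathcomp Require Import all_boot all_order all_algebra all_fingroup.
From mathcomp Require Import all_classical all_reals all_analysis.
From mathcomp Require Import ring lra.
From Stdlib Require Import Relations.
Set Implicit Arguments. Unset Strict Implicit. Unset Printing Implicit Defensive.
Import Order.TTheory GRing.Theory Num.Theory.
Import numFieldNormedType.Exports.
Local Open Scope ring_scope.

Lemma cos_range (R : realType) (a b c : R) : 0 < a -> 0 < b -> 0 < c ->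
  a < b + c -> b < a + c -> c < a + b ->
  -1 <= (b^+2 + c^+2 - a^+2) / (2 * b * c) <= 1.
Proof.
move=> a0 b0 c0 h1 h2 h3.
have bc : 0 < 2 * b * c by rewrite !mulr_gt0.
apply/andP; split.
  rewrite ler_pdivlMr // -subr_ge0.
  have -> : b ^+ 2 + c ^+ 2 - a ^+ 2 - -1 * (2 * b * c) = (b + c - a) * (b + c + a) by ring.
  apply/ltW/mulr_gt0; lra.
rewrite ler_pdivrMr // -subr_ge0.
have -> : 1 * (2 * b * c) - (b ^+ 2 + c ^+ 2 - a ^+ 2) = (a - b + c) * (a + b - c) by ring.
apply/ltW/mulr_gt0; lra.
Qed.

Lemma acos_sum (R : realType) (a b c : R) : 0 < a -> 0 < b -> 0 < c ->
  a < b + c -> b < a + c -> c < a + b ->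
  acos ((b^+2 + c^+2 - a^+2) / (2 * b * c)) +
  acos ((a^+2 + c^+2 - b^+2) / (2 * a * c)) +
  acos ((a^+2 + b^+2 - c^+2) / (2 * a * b)) = pi.
Proof.
move=> a0 b0 c0 h1 h2 h3.
have hp := @cos_range R a b c a0 b0 c0 h1 h2 h3.
have hq : -1 <= (a^+2 + c^+2 - b^+2) / (2 * a * c) <= 1.
  apply: cos_range => //; lra.
have hr : -1 <= (a^+2 + b^+2 - c^+2) / (2 * a * b) <= 1.
  apply: cos_range => //; lra.
set p := (b^+2 + c^+2 - a^+2) / (2 * b * c) in hp *.
set q := (a^+2 + c^+2 - b^+2) / (2 * a * c) in hq *.
set r := (a^+2 + b^+2 - c^+2) / (2 * a * b) in hr *.
have an : a != 0 by rewrite gt_eqF.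
have bn : b != 0 by rewrite gt_eqF.
have cn : c != 0 by rewrite gt_eqF.
have rpq : r + p * q = (a + b + c) * (b + c - a) * (a + c - b) * (a + b - c) / (4 * a * b * c ^+ 2).
  rewrite /r /p /q; field; by rewrite ?an ?bn ?cn.
have rpq0 : 0 <= r + p * q.
  rewrite rpq; apply/ltW/divr_gt0; last by rewrite !mulr_gt0 // exprn_gt0.
  rewrite !mulr_gt0 //; lra.
have p2 : 0 <= 1 - p ^+ 2.
  rewrite subr_ge0 -ler_sqrt ?sqr_ge0 // sqrtr_sqr sqrtr1 ler_norml; lra.
have key : Num.sqrt (1 - p ^+ 2) * Num.sqrt (1 - q ^+ 2) = r + p * q.
  rewrite -sqrtrM // (_ : (1 - p ^+ 2) * (1 - q ^+ 2) = (r + p * q) ^+ 2).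
    by rewrite sqrtr_sqr ger0_norm.
  rewrite /r /p /q; field; by rewrite ?an ?bn ?cn.
have pq : -p <= q.
  rewrite -subr_ge0 opprK.
  have -> : q + p = (a + b) * (c - a + b) * (c + a - b) / (2 * a * b * c).
    rewrite /p /q; field; by rewrite ?an ?bn ?cn.
  apply/ltW/divr_gt0; last by rewrite !mulr_gt0.
  rewrite !mulr_gt0 //; lra.
have hnp : -1 <= - p <= 1 by apply/andP; split; lra.
have AB : acos q <= pi - acos p.
  rewrite -acosN // leNgt.
  rewrite -ltr_cos ?in_itv /= ?acos_ge0 ?acos_lepi // !acosK ?in_itv //=.
  by rewrite -leNgt.
have A0 := acos_ge0 hp; have B0 := acos_ge0 hq.
have cr : cos (pi - (acos p + acos q)) = r.
  rewrite addrC cosDpi cosN cosD !acosK ?in_itv //= !sin_acos // key.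
  ring.
rewrite -cr cosK ?in_itv /=; first ring.
apply/andP; split; lra.
Qed.
Lemma ang_sym (R : realType) (x y z : R) : ext_angle x y z = ext_angle x z y.
Proof. by rewrite /ext_angle [z + y]addrC orbC [z ^+ 2 + _]addrC [2 * z * y]mulrAC. Qed.

Lemma ang_scale (R : realType) (x y z c : R) : 0 < c -> 0 < y -> 0 < z ->
  ext_angle (x * c) (y * c) (z * c) = ext_angle x y z.
Proof.
move=> c0 y0 z0; rewrite /ext_angle -!mulrDl !ler_pM2r //.
have cn : c != 0 by rewrite gt_eqF.
have yn : y != 0 by rewrite gt_eqF.
have zn : z != 0 by rewrite gt_eqF.
have -> : ((y * c) ^+ 2 + (z * c) ^+ 2 - (x * c) ^+ 2) / (2 * (y * c) * (z * c)) =
  (y ^+ 2 + z ^+ 2 - x ^+ 2) / (2 * y * z) by field; rewrite ?cn ?yn ?zn.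
by [].
Qed.

Lemma ang_sum (R : realType) (x y z : R) : 0 < x -> 0 < y -> 0 < z ->
  ext_angle x y z + ext_angle y x z + ext_angle z x y = pi.
Proof.
move=> x0 y0 z0; rewrite /ext_angle.
case: (leP (y + z) x) => h1.
  have -> : (x + z <= y) = false by apply/negbTE; rewrite -ltNge; lra.
  have -> : (x + y <= z) = false by apply/negbTE; rewrite -ltNge; lra.
  by rewrite (addrC z y) h1 /= !addr0.
have hyx : (y + x <= z) = (x + y <= z) by rewrite addrC.
have hzy : (z + y <= x) = (y + z <= x) by rewrite addrC.
have hzx : (z + x <= y) = (x + z <= y) by rewrite addrC.
rewrite hyx hzy hzx [y + z <= x]leNgt h1 /=.
case: (leP (x + z) y) => h2.
  have -> : (x + y <= z) = false by apply/negbTE; rewrite -ltNge; lra.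
  by rewrite add0r addr0.
case: (leP (x + y) z) => h3.
  by rewrite /= !add0r.
rewrite /=.
have := @acos_sum R x y z x0 y0 z0 h1 h2 h3.
by [].
Qed.

Definition o0 : 'I_4 := ord0.
Definition o1 : 'I_4 := lift ord0 (ord0 : 'I_3).
Definition o2 : 'I_4 := lift ord0 (lift ord0 (ord0 : 'I_2)).
Definition o3 : 'I_4 := lift ord0 (lift ord0 (lift ord0 (ord0 : 'I_1))).

Lemma enum4 : enum 'I_4 = [:: o0; o1; o2; o3].
Proof. by apply: (inj_map val_inj); rewrite val_enum_ord. Qed.

Lemma oth_prop (i j : 'I_4) : i != j ->
  [&& oth1 i j != i, oth1 i j != j, oth2 i j != i, oth2 i j != j & oth1 i j != oth2 i j].
Proof.
rewrite /oth1 /oth2 /oth enum4.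
case: i j => [[|[|[|[|//]]]] pi] [[|[|[|[|//]]]] pj]; vm_compute; by [].
Qed.

Lemma sum_pairs (R : realType) (F : 'I_4 -> 'I_4 -> R) :
  \sum_(i : 'I_4) \sum_(j : 'I_4 | (i < j)%N) F i j =
  F o0 o1 + F o0 o2 + F o0 o3 + F o1 o2 + F o1 o3 + F o2 o3.
Proof.
under eq_bigr do rewrite big_mkcond.
rewrite !big_ord_recl !big_ord0 /=.
rewrite /o0 /o1 /o2 /o3 !addr0 !add0r; ring.
Qed.

Lemma oth_vals :
  ((oth1 o0 o1 = o2) /\ (oth2 o0 o1 = o3)) /\ ((oth1 o0 o2 = o1) /\ (oth2 o0 o2 = o3)) /\
  ((oth1 o0 o3 = o1) /\ (oth2 o0 o3 = o2)) /\ ((oth1 o1 o2 = o0) /\ (oth2 o1 o2 = o3)) /\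
  ((oth1 o1 o3 = o0) /\ (oth2 o1 o3 = o2)) /\ ((oth1 o2 o3 = o0) /\ (oth2 o2 o3 = o1)).
Proof. by rewrite /oth1 /oth2 /oth enum4; do !split. Qed.

Lemma alphaE (R : realType) (T E : finType) (ecl : T -> 'I_4 -> 'I_4 -> E) l s i j :
  alpha ecl l s i j =
  ext_angle (expR ((l (ecl s i j) + l (ecl s (oth1 i j) (oth2 i j))) / 2 :> R))
            (expR ((l (ecl s i (oth1 i j)) + l (ecl s j (oth2 i j))) / 2))
            (expR ((l (ecl s i (oth2 i j)) + l (ecl s j (oth1 i j))) / 2)).
Proof. by []. Qed.

Lemma tet_sum (R : realType) (T E : finType) (ecl : T -> 'I_4 -> 'I_4 -> E)
  (Hs : forall s i j, ecl s i j = ecl s j i) (l : E -> R) s (u : 'I_4 -> R) :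
  \sum_(i : 'I_4) \sum_(j : 'I_4 | (i < j)%N) alpha ecl l s i j * (u i + u j) =
  pi * \sum_(i : 'I_4) u i.
Proof.
rewrite sum_pairs !alphaE.
have [[-> ->] [[-> ->] [[-> ->] [[-> ->] [[-> ->] [-> ->]]]]]] := oth_vals.
rewrite (Hs s o1 o0) (Hs s o2 o0) (Hs s o3 o0) (Hs s o2 o1) (Hs s o3 o1) (Hs s o3 o2).
set L01 := l (ecl s o0 o1). set L02 := l (ecl s o0 o2). set L03 := l (ecl s o0 o3).
set L12 := l (ecl s o1 o2). set L13 := l (ecl s o1 o3). set L23 := l (ecl s o2 o3).
rewrite (addrC L12 L03) (addrC L13 L02) (addrC L23 L01).
set a := expR ((L01 + L23) / 2). set b := expR ((L02 + L13) / 2).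
set c := expR ((L03 + L12) / 2).
rewrite -(@ang_sum R a b c) ?expR_gt0 //.
rewrite !big_ord_recl big_ord0 /o0 /o1 /o2 /o3; ring.
Qed.

Lemma ecl_sym (T V E : finType) (glue : T -> 'I_4 -> (T * {perm 'I_4})%type)
    (vcl : T -> 'I_4 -> V) (ecl : T -> 'I_4 -> 'I_4 -> E) (eend : E -> (V * V)%type)
    (HM : closed_pseudo3 glue vcl ecl eend) s i j : ecl s i j = ecl s j i.
Proof.
have [_ [_ [_ [_ [H5 _]]]]] := HM.
case: (eqVneq i j) => [->//|ij].
apply/(H5 (s, i, j) (s, j, i)) => /=; first exact/eqP.
  by apply/eqP; rewrite eq_sym.
by apply: rst_step; left.
Qed.

Lemma vact_ecl (R : realType) (T V E : finType) (glue : T -> 'I_4 -> (T * {perm 'I_4})%type)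
    (vcl : T -> 'I_4 -> V) (ecl : T -> 'I_4 -> 'I_4 -> E) (eend : E -> (V * V)%type)
    (HM : closed_pseudo3 glue vcl ecl eend) (w : V -> R) l s i j : i != j ->
  vact eend w l (ecl s i j) = l (ecl s i j) + w (vcl s i) + w (vcl s j).
Proof.
move=> ij; have [_ [_ [_ [_ [_ H6]]]]] := HM.
rewrite /vact; case: (H6 s i j (elimN eqP ij)) => -> /=; first by [].
by rewrite addrAC.
Qed.

Lemma expR_split (R : realType) (X Y u v u' v' : R) :
  expR ((X + u + v + (Y + u' + v')) / 2) = expR ((X + Y) / 2) * expR ((u + v + u' + v') / 2).
Proof. by rewrite -expRD; congr expR; ring. Qed.

Lemma alpha_inv (R : realType) (T V E : finType) (glue : T -> 'I_4 -> (T * {perm 'I_4})%type)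
    (vcl : T -> 'I_4 -> V) (ecl : T -> 'I_4 -> 'I_4 -> E) (eend : E -> (V * V)%type)
    (HM : closed_pseudo3 glue vcl ecl eend) (w : V -> R) l s i j : i != j ->
  alpha ecl (vact eend w l) s i j = alpha ecl l s i j.
Proof.
move=> ij; rewrite !alphaE.
have /and5P[k1 k2 h1 h2 kh] := @oth_prop i j ij.
set k := oth1 i j in k1 k2 kh *; set h := oth2 i j in h1 h2 kh *.
rewrite !(vact_ecl HM) // 1?eq_sym //.
rewrite !expR_split.
set wi := w (vcl s i); set wj := w (vcl s j); set wk := w (vcl s k); set wh := w (vcl s h).
have -> : wi + wk + wj + wh = wi + wj + wk + wh by ring.
have -> : wi + wh + wj + wk = wi + wj + wk + wh by ring.
by rewrite ang_scale ?expR_gt0.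
Qed.

Lemma gcurv_inv (R : realType) (T V E : finType) (glue : T -> 'I_4 -> (T * {perm 'I_4})%type)
    (vcl : T -> 'I_4 -> V) (ecl : T -> 'I_4 -> 'I_4 -> E) (eend : E -> (V * V)%type)
    (HM : closed_pseudo3 glue vcl ecl eend) (w : V -> R) l e :
  gcurv ecl (vact eend w l) e = gcurv ecl l e.
Proof.
rewrite /gcurv; congr (_ - _); apply: eq_bigr => s _; apply: eq_bigr => i _.
apply: eq_bigr => j /andP[ij _]; apply: (alpha_inv HM).
by rewrite neq_ltn ij.
Qed.

Lemma collapse (R : realType) (E X : finType) (P : pred X) (g : X -> E) (G : X -> R) (F : E -> R) :
  \sum_(e : E) (\sum_(x | P x && (g x == e)) G x) * F e = \sum_(x | P x) G x * F (g x).
Proof.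
rewrite (partition_big g predT) //=; apply: eq_bigr => e _.
by rewrite mulr_suml; apply: eq_bigr => x /andP[_ /eqP ->].
Qed.

Lemma curv_weight (R : realType) (T V E : finType) (glue : T -> 'I_4 -> (T * {perm 'I_4})%type)
    (vcl : T -> 'I_4 -> V) (ecl : T -> 'I_4 -> 'I_4 -> E) (eend : E -> (V * V)%type)
    (HM : closed_pseudo3 glue vcl ecl eend) (w : V -> R) (l : E -> R) :
  \sum_(e : E) gcurv ecl l e * vact eend w (fun _ => 0) e =
  \sum_(e : E) 2 * pi * vact eend w (fun _ => 0) e -
  \sum_(s : T) pi * \sum_(i : 'I_4) w (vcl s i).
Proof.
rewrite /gcurv.
under eq_bigr do rewrite mulrBl.
rewrite sumrB; congr (_ - _).
under eq_bigr do rewrite !mulr_suml.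
rewrite exchange_big /=; apply: eq_bigr => s _.
under eq_bigr do rewrite mulr_suml.
rewrite exchange_big /=.
under eq_bigr => i _ do rewrite collapse.
rewrite -(tet_sum (ecl_sym HM) l s (fun i => w (vcl s i))).
apply: eq_bigr => i _; apply: eq_bigr => j ij.
by rewrite (vact_ecl HM) ?add0r // neq_ltn ij.
Qed.
Local Open Scope classical_set_scope.

Lemma derive_sumE (R : realType) (E : finType) (F : E -> R -> R) (dF : E -> R) (x : R) :
  (forall e, is_derive x 1 (F e) (dF e)) ->
  is_derive x 1 (fun s => \sum_e F e s) (\sum_e dF e).
Proof.
move=> H; have -> : (fun s => \sum_e F e s) = \sum_e F e by rewrite fct_sumE.
elim/big_ind2 : _ => //.
- exact: is_derive_cst.
- by move=> *; exact: is_deriveD.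
Qed.

Lemma cvg_sumE (R : realType) (E : finType) (G : set_system R) (FG : Filter G)
  (F : E -> R -> R) (l : E -> R) :
  (forall e, F e @ G --> l e) -> (fun s => \sum_e F e s) @ G --> \sum_e l e.
Proof.
move=> H; have -> : (fun s => \sum_e F e s) = \sum_e F e by rewrite fct_sumE.
elim/big_ind2 : _ => //.
- exact: cvg_cst.
- by move=> *; exact: cvgD.
Qed.

Lemma sol_shift (R : realType) (T V E : finType) (glue : T -> 'I_4 -> (T * {perm 'I_4})%type)
    (vcl : T -> 'I_4 -> V) (ecl : T -> 'I_4 -> 'I_4 -> E) (eend : E -> (V * V)%type)
    (HM : closed_pseudo3 glue vcl ecl eend) (w : V -> R) (lT : R -> E -> R) (l0 : E -> R) :
  ext_ricci_sol ecl lT l0 ->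
  ext_ricci_sol ecl (fun t => vact eend w (lT t)) (vact eend w l0).
Proof.
case=> H0 [Hd Hc]; split; first by rewrite H0.
split.
  move=> e t t0; rewrite (gcurv_inv HM) /vact.
  have -> : (fun s => lT s e + w (eend e).1 + w (eend e).2) =
     (fun s => lT s e) + cst (w (eend e).1 + w (eend e).2).
    by apply/funext => x /=; rewrite addrA.
  rewrite -[X in is_derive _ _ _ X]addr0.
  apply: is_deriveD; first exact: Hd.
move=> e; rewrite /vact.
apply: cvgD; last exact: cvg_cst.
apply: cvgD; last exact: cvg_cst.
exact: Hc.
Qed.

Lemma quot_pres (R : realType) (T V E : finType) (glue : T -> 'I_4 -> (T * {perm 'I_4})%type)
    (vcl : T -> 'I_4 -> V) (ecl : T -> 'I_4 -> 'I_4 -> E) (eend : E -> (V * V)%type)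
    (HM : closed_pseudo3 glue vcl ecl eend)
    (Hzero : exists lz : E -> R, forall e : E, gcurv ecl lz e = 0)
    (lT : R -> E -> R) (l0T : E -> R) :
  in_quot eend l0T -> ext_ricci_sol ecl lT l0T ->
  forall t : R, 0 <= t -> in_quot eend (lT t).
Proof.
move=> HT [H0 [Hd Hc]] t t0 w'.
set c := vact eend w' (fun=> 0).
have [lz Hlz] := Hzero.
have Kz : forall l, \sum_e gcurv ecl l e * c e = 0.
  move=> l; rewrite (curv_weight HM w' l) -(curv_weight HM w' lz).
  by rewrite big1 // => e _; rewrite Hlz mul0r.
set f := fun s => \sum_e lT s e * c e.
have fd : forall x : R, 0 < x -> is_derive x 1 f 0.
  move=> x x0; rewrite -(Kz (lT x)); apply: derive_sumE => e.
  have -> : (fun s => lT s e * c e) = c e *: (fun s => lT s e).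
    by apply/funext => y /=; rewrite mulrC.
  rewrite mulrC; apply: is_deriveZ; exact: Hd.
have f0 : f 0 = 0.
  by have := HT w'; rewrite /f H0.
change (f t = 0); rewrite -f0.
move: t0; rewrite le_eqVlt => /orP[/eqP <-|tp]; first by [].
have H1 : forall x, x \in `]0, t[%R -> is_derive x 1 f ((fun=> 0) x).
  by move=> x; rewrite in_itv /= => /andP[x0 _]; apply: fd.
have H2 : {within `[0, t], continuous f}.
  apply/continuous_within_itvP => //; split.
  + move=> x; rewrite in_itv /= => /andP[x0 _].
    by apply/differentiable_continuous/derivable1_diffP; case: (fd x x0).
  + apply: cvg_sumE => e; apply: cvgM; [exact: Hc | exact: cvg_cst].
  + apply: cvg_at_left_filter.
    by apply/differentiable_continuous/derivable1_diffP; case: (fd t tp).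
have [x _] := MVT tp H1 H2.
by rewrite mul0r => /eqP; rewrite subr_eq0 => /eqP.
Qed.

Local Close Scope classical_set_scope.

Theorem mainTheorem9 (R : realType) (T V E : finType)
    (glue : T -> 'I_4 -> (T * {perm 'I_4})%type)
    (vcl : T -> 'I_4 -> V) (ecl : T -> 'I_4 -> 'I_4 -> E) (eend : E -> (V * V)%type)
    (HM : closed_pseudo3 glue vcl ecl eend)
    (Hzero : exists lz : E -> R, forall e : E, gcurv ecl lz e = 0)
    (l0 : E -> R) (w : V -> R) (l0T : E -> R)
    (Hdec : l0 = vact eend w l0T) (HT : in_quot eend l0T) :
  (forall lT : R -> E -> R, ext_ricci_sol ecl lT l0T ->
      (forall t : R, 0 <= t -> in_quot eend (lT t)) /\
      ext_ricci_sol ecl (fun t => vact eend w (lT t)) l0) /\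
  (forall l : R -> E -> R, ext_ricci_sol ecl l l0 ->
      exists lT : R -> E -> R, ext_ricci_sol ecl lT l0T /\
        forall t : R, 0 <= t -> l t = vact eend w (lT t)).
Proof.
split.
- move=> lT Hsol; split; first exact: (quot_pres HM Hzero HT Hsol).
  by rewrite Hdec; exact: (sol_shift HM w Hsol).
- move=> l Hsol; exists (fun t => vact eend (fun v => - w v) (l t)); split.
  + have -> : l0T = vact eend (fun v => - w v) l0.
      by rewrite Hdec; apply/funext => e; rewrite /vact; ring.
    exact: (sol_shift HM _ Hsol).
  + by move=> t _; apply/funext => e; rewrite /vact; ring.
Qed.
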